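(* Let $\mathbf{C}$ be a positively graded $\Bbbk$-linear category and let $(\mathcal{X}^\bullet,d^\bullet)$ be a minimal complex of graded $\mathbf{C}$-modules each of whose components is a direct sum of modules of the form $\mathsf{P}(\lambda)\langle k\rangle$, $\lambda\in\operatorname{Ob}(\mathbf{C})$, $k\in\mathbb{Z}$. For $i,j\in\mathbb{Z}$ write $\mathcal{X}^j=\mathcal{X}\{>i\}^j\oplus\mathcal{X}\{=i\}^j\oplus\mathcal{X}\{<i\}^j$, where $\mathcal{X}\{>i\}^j$ (resp. $\mathcal{X}\{=i\}^j$, $\mathcal{X}\{<i\}^j$) is the sum of the indecomposable summands isomorphic to some $\mathsf{P}(\lambda)\langle k\rangle$ with $k>i$ (resp. $k=i$, $k<i$). Then for all $i,j\in\mathbb{Z}$ we have $d^j(\mathcal{X}\{>i\}^j)\subseteq\mathcal{X}\{>i+1\}^{j+1}$.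
   Context: $\Bbbk$ is a field. $\mathbf{C}$ positively graded means: morphism spaces are $\mathbb{Z}$-graded with composition adding degrees, $\mathbf{C}_i(\lambda,\mu)=0$ for $i<0$, $\mathbf{C}_0(\lambda,\mu)=0$ for $\lambda\ne\mu$ and $\mathbf{C}_0(\lambda,\lambda)=\Bbbk e_\lambda$, all $\mathbf{C}_i(\lambda,\mu)$ finite-dimensional, and for each $\lambda,i$ only finitely many $\mu$ with $\mathbf{C}_i(\lambda,\mu)\ne0$ or $\mathbf{C}_i(\mu,\lambda)\ne0$. Graded $\mathbf{C}$-modules are $\Bbbk$-linear functors from $\mathbf{C}$ to graded vector spaces sending degree-$k$ morphisms to degree-$k$ maps; $\mathsf{M}\langle i\rangle(\lambda)_j=\mathsf{M}(\lambda)_{i+j}$; $\mathsf{P}(\lambda)=\mathbf{C}(\lambda,-)$. A complex is minimal if it has no direct summand of the form $\cdots\to0\to\mathsf{M}\xrightarrow{\sim}\mathsf{M}\to0\to\cdots$. *)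

(* Defs.v *)
From HB Require Import structures.
From Stdlib Require Import List.
From mathcomp Require Import all_boot all_order all_algebra.
Set Implicit Arguments. Unset Strict Implicit. Unset Printing Implicit Defensive.
Import Order.TTheory GRing.Theory Num.Theory.
Local Open Scope ring_scope.

(* Hom x y a is the homogeneous
   piece C_a(x,y) of degree a.  Composition g o f of f : C_a(x,y) and
   g : C_b(y,z) lands in C_c(x,z) for any c with a + b = c (the equality is
   passed explicitly to avoid casts). *)
Record PGCat (F : fieldType) := {
  Obj : Type;
  Hom : Obj -> Obj -> int -> lmodType F;
  cmp : forall (x y z : Obj) (a b c : int),
      a + b = c -> Hom y z b -> Hom x y a -> Hom x z c;
  cid : forall x : Obj, Hom x x 0;
  cmp_linl : forall x y z a b c (e : a + b = c) (g : Hom y z b) (r : F)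
      (f1 f2 : Hom x y a),
      cmp e g (r *: f1 + f2) = r *: cmp e g f1 + cmp e g f2;
  cmp_linr : forall x y z a b c (e : a + b = c) (g1 g2 : Hom y z b) (r : F)
      (f : Hom x y a),
      cmp e (r *: g1 + g2) f = r *: cmp e g1 f + cmp e g2 f;
  cmp_assoc : forall w x y z a b c ab bc abc
      (e1 : a + b = ab) (e2 : b + c = bc) (e3 : ab + c = abc)
      (e4 : a + bc = abc) (f : Hom w x a) (g : Hom x y b) (h : Hom y z c),
      cmp e3 h (cmp e1 g f) = cmp e4 (cmp e2 h g) f;
  cmp_idl : forall x y a (e : a + 0 = a) (f : Hom x y a), cmp e (cid y) f = f;
  cmp_idr : forall x y a (e : 0 + a = a) (f : Hom x y a), cmp e f (cid x) = f;
  hom_neg : forall x y a (f : Hom x y a), a < 0 -> f = 0;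
  hom_deg0_off : forall x y (f : Hom x y 0), x <> y -> f = 0;
  hom_deg0_diag : forall x (f : Hom x x 0), exists r : F, f = r *: cid x;
  hom_findim : forall x y a, exists b : seq (Hom x y a),
      forall f, exists r : nat -> F, f = \sum_(i < size b) r i *: b`_i;
  hom_locfin : forall x a, exists l : seq Obj, forall y,
      ((exists f : Hom x y a, f <> 0) \/ (exists f : Hom y x a, f <> 0)) ->
      Stdlib.Lists.List.In y l
}.
Arguments Hom {F} p _ _ _.
Arguments cid {F} p _.

(* Graded C-modules: gcar M x j = M(x)_j; a morphism of degree a acts as a
   map M(x)_j -> M(y)_j' with j + a = j'.  k-linear functor axioms. *)
Record GMod (F : fieldType) (C : PGCat F) := {
  gcar : Obj C -> int -> lmodType F;
  gact : forall (x y : Obj C) (a j j' : int),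
      j + a = j' -> Hom C x y a -> gcar x j -> gcar y j';
  gact_linv : forall x y a j j' (e : j + a = j') (f : Hom C x y a) (r : F) v w,
      gact e f (r *: v + w) = r *: gact e f v + gact e f w;
  gact_linf : forall x y a j j' (e : j + a = j') (f g : Hom C x y a) (r : F) v,
      gact e (r *: f + g) v = r *: gact e f v + gact e g v;
  gact_id : forall x j (e : j + 0 = j) v, gact e (cid C x) v = v;
  gact_comp : forall x y z a b ab j j1 j2
      (e1 : j + a = j1) (e2 : j1 + b = j2) (e3 : a + b = ab) (e4 : j + ab = j2)
      (f : Hom C x y a) (g : Hom C y z b) v,
      gact e4 (cmp e3 g f) v = gact e2 g (gact e1 f v)
}.

Unset Implicit Arguments.
Record GHom (F : fieldType) (C : PGCat F) (M N : GMod C) := {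
  ghom :> forall (x : Obj C) (j : int), gcar M x j -> gcar N x j;
  ghom_lin : forall (x : Obj C) (j : int) (r : F) (v w : gcar M x j),
      ghom x j (r *: v + w) = r *: ghom x j v + ghom x j w;
  ghom_nat : forall (x y : Obj C) (a j j' : int) (e : j + a = j')
      (f : Hom C x y a) (v : gcar M x j),
      ghom y j' (gact e f v) = gact e f (ghom x j v)
}.

Arguments GHom {F C} M N.
Arguments ghom {F C M N} _ _ _ _.
Set Implicit Arguments.
Unset Implicit Arguments.
Record GComplex (F : fieldType) (C : PGCat F) := {
  cobj : int -> GMod C;
  cd : forall j : int, GHom (cobj j) (cobj (j + 1));
  cdd : forall j x n v, cd (j + 1) x n (cd j x n v) = 0
}.

Arguments GComplex {F} C.
Arguments cobj {F C} _ _.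
Arguments cd {F C} _ _.
Arguments cdd {F C} _ _ _ _ _.
Set Implicit Arguments.
(* The module P(l)<k> : P(l)<k>(x)_j = C_{k+j}(l, x). *)
Lemma shift_eq (k j a j' : int) : j + a = j' -> k + j + a = k + j'.
Proof. by move=> <-; rewrite addrA. Qed.

Section Pk.
Variables (F : fieldType) (C : PGCat F) (l : Obj C) (k : int).

Definition Pk_car (x : Obj C) (j : int) : lmodType F := Hom C l x (k + j).

Definition Pk_act (x y : Obj C) (a j j' : int) (e : j + a = j')
  (f : Hom C x y a) (v : Pk_car x j) : Pk_car y j' := cmp (shift_eq k e) f v.

Lemma Pk_linv x y a j j' (e : j + a = j') (f : Hom C x y a) (r : F) v w :
  Pk_act e f (r *: v + w) = r *: Pk_act e f v + Pk_act e f w.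
Proof. exact: cmp_linl. Qed.

Lemma Pk_linf x y a j j' (e : j + a = j') (f g : Hom C x y a) (r : F) v :
  Pk_act e (r *: f + g) v = r *: Pk_act e f v + Pk_act e g v.
Proof. exact: cmp_linr. Qed.

Lemma Pk_id x j (e : j + 0 = j) v : Pk_act e (cid C x) v = v.
Proof. exact: cmp_idl. Qed.

Lemma Pk_comp x y z a b ab j j1 j2
  (e1 : j + a = j1) (e2 : j1 + b = j2) (e3 : a + b = ab) (e4 : j + ab = j2)
  (f : Hom C x y a) (g : Hom C y z b) v :
  Pk_act e4 (cmp e3 g f) v = Pk_act e2 g (Pk_act e1 f v).
Proof. rewrite /Pk_act; symmetry; exact: cmp_assoc. Qed.

Definition Pk : GMod C :=
  @Build_GMod F C Pk_car Pk_act Pk_linv Pk_linf Pk_id Pk_comp.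
End Pk.

(* M is the (internal) direct sum of the images of the maps
   inc s : P(lam s)<k s> -> M, s ranging over an arbitrary index type S. *)
Definition is_dsum (F : fieldType) (C : PGCat F) (M : GMod C) (S : Type)
  (lam : S -> Obj C) (k : S -> int) (inc : forall s, GHom (Pk (lam s) (k s)) M)
  : Prop :=
  (forall x n (v : gcar M x n), exists (l : seq S)
      (w : forall s, Hom C (lam s) x (k s + n)),
      v = \sum_(s <- l) inc s x n (w s)) /\
  (forall x n (l : seq S) (w : forall s, Hom C (lam s) x (k s + n)),
      Stdlib.Lists.List.NoDup l -> \sum_(s <- l) inc s x n (w s) = 0 ->
      forall s, Stdlib.Lists.List.In s l -> w s = 0).

(* v lies in the sum of the summands P(lam s)<k s> with P (k s);
   e.g. P := (fun t => i < t) gives X{>i}. *)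
Definition in_part (F : fieldType) (C : PGCat F) (M : GMod C) (S : Type)
  (lam : S -> Obj C) (k : S -> int) (inc : forall s, GHom (Pk (lam s) (k s)) M)
  (P : int -> Prop) (x : Obj C) (n : int) (v : gcar M x n) : Prop :=
  exists (l : seq S) (w : forall s, Hom C (lam s) x (k s + n)),
    (forall s, Stdlib.Lists.List.In s l -> P (k s)) /\ v = \sum_(s <- l) inc s x n (w s).

(* Minimality: X has no direct summand (in the category of complexes) of the
   form  ... -> 0 -> M --phi--> M -> 0 -> ...  with M nonzero and phi an
   isomorphism.  Placing the two copies of M in degrees j+1 and j+1+1, a
   direct summand is given by chain maps iota : Y -> X, pi : X -> Y with
   pi o iota = id, written out componentwise below. *)
Definition minimal (F : fieldType) (C : PGCat F) (X : GComplex C) : Prop :=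
  forall (j : int) (M : GMod C) (phi : GHom M M),
    (exists psi : GHom M M,
        (forall x n v, psi x n (phi x n v) = v) /\
        (forall x n v, phi x n (psi x n v) = v)) ->
    (exists x n (v : gcar M x n), v <> 0) ->
    ~ exists (i0 : GHom M (cobj X (j + 1))) (i1 : GHom M (cobj X (j + 1 + 1)))
             (p0 : GHom (cobj X (j + 1)) M) (p1 : GHom (cobj X (j + 1 + 1)) M),
        (forall x n v, cd X (j + 1) x n (i0 x n v) = i1 x n (phi x n v)) /\
        (forall x n v, cd X (j + 1 + 1) x n (i1 x n v) = 0) /\
        (forall x n v, p0 x n (cd X j x n v) = 0) /\
        (forall x n v, p1 x n (cd X (j + 1) x n v) = phi x n (p0 x n v)) /\
        (forall x n v, p0 x n (i0 x n v) = v) /\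
        (forall x n v, p1 x n (i1 x n v) = v).

(* Main.v *)
Require Import Defs.
From HB Require Import structures.
From mathcomp Require Import all_boot all_order all_algebra.
From Stdlib Require Import ClassicalEpsilon.
Import Order.TTheory GRing.Theory Num.Theory.
Local Open Scope ring_scope.
Set Warnings "-notation-overridden -ambiguous-paths".
Set Implicit Arguments. Unset Strict Implicit. Unset Printing Implicit Defensive.

Definition ceq (T : Type) : Type := T.
Definition ceqb (T : Type) (x y : ceq T) : bool :=
  if excluded_middle_informative (x = y) then true else false.
Lemma ceqP (T : Type) : Equality.axiom (@ceqb T).
Proof. move=> x y; rewrite /ceqb; case: excluded_middle_informative => h; by constructor. Qed.
HB.instance Definition _ (T : Type) := hasDecEq.Build (ceq T) (@ceqP T).

Lemma In_mem (T : Type) (t : T) (l : seq (ceq T)) : List.In t l <-> (t : ceq T) \in l.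
Proof.
elim: l => [|a l IH]; first by split.
rewrite in_cons /=; split.
  by case=> [->|/IH ->]; rewrite ?eqxx ?orbT.
by case/orP=> [/eqP ->|/IH]; [left|right].
Qed.

Lemma uniq_NoDup (T : Type) (l : seq (ceq T)) : uniq l -> List.NoDup l.
Proof.
elim: l => [|a l IH] /=; first by constructor.
by case/andP=> na u; constructor; [rewrite In_mem; apply/negP|apply: IH].
Qed.

Section Lin.
Variables (F : fieldType) (V W : lmodType F) (f : V -> W).
Hypothesis hf : forall r v w, f (r *: v + w) = r *: f v + f w.
Lemma lin0 : f 0 = 0.
Proof.
have := hf 1 0 0; rewrite scale1r addr0 => /eqP.
by rewrite -subr_eq0 opprD addrA scale1r subrr add0r oppr_eq0 => /eqP.
Qed.
Lemma linD v w : f (v + w) = f v + f w.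
Proof. by have := hf 1 v w; rewrite !scale1r. Qed.
Lemma linZ r v : f (r *: v) = r *: f v.
Proof. by have := hf r v 0; rewrite !addr0 lin0 addr0. Qed.
Lemma linN v : f (- v) = - f v.
Proof. by rewrite -scaleN1r linZ scaleN1r. Qed.
Lemma linB v w : f (v - w) = f v - f w.
Proof. by rewrite linD linN. Qed.
Lemma linMn v n : f (v *+ n) = f v *+ n.
Proof. by elim: n => [|n IH]; rewrite ?mulr0n ?lin0 // !mulrS linD IH. Qed.
Lemma lin_sum (I : Type) (l : seq I) (g : I -> V) :
  f (\sum_(i <- l) g i) = \sum_(i <- l) f (g i).
Proof.
elim: l => [|a l IH]; first by rewrite !big_nil lin0.
by rewrite !big_cons linD IH.
Qed.
End Lin.

Section Cat.
Variables (F : fieldType) (C : PGCat F).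

Lemma cmp_f0 x y z a b c (e : a + b = c) (g : Defs.Hom C y z b) :
  cmp e g (0 : Defs.Hom C x y a) = 0.
Proof. exact: (lin0 (cmp_linl e g)). Qed.

Lemma cmp_0f x y z a b c (e : a + b = c) (f : Defs.Hom C x y a) :
  cmp e (0 : Defs.Hom C y z b) f = 0.
Proof. exact: (@lin0 _ _ _ (fun g => cmp e g f) (fun r g1 g2 => cmp_linr e g1 g2 r f)). Qed.

Definition castid (x : Obj C) (c : int) (e0 : 0 = c) : Defs.Hom C x x c :=
  eq_rect 0 (fun z => Defs.Hom C x x z) (cid C x) c e0.

Lemma cmp_castid (x y : Obj C) c (e0 : 0 = c) a (e : c + a = a)
  (f : Defs.Hom C x y a) : cmp e f (castid x e0) = f.
Proof. case: c / e0 e => e; exact: cmp_idr. Qed.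

Definition gcomp (M N P : GMod C) (g : GHom N P) (f : GHom M N) : GHom M P.
refine (@Build_GHom F C M P (fun x n v => g x n (f x n v)) _ _).
- by move=> x j r v w; rewrite ghom_lin ghom_lin.
- by move=> x y a j j' e h v; rewrite !ghom_nat.
Defined.

Definition gid (M : GMod C) : GHom M M.
refine (@Build_GHom F C M M (fun x n v => v) _ _); by [].
Defined.

Lemma ghom0 (M N : GMod C) (g : GHom M N) x n : g x n 0 = 0.
Proof. exact: (lin0 (@ghom_lin _ _ _ _ g x n)). Qed.

Lemma precomp_eq (b k' k n : int) : b + k' = k -> b + (k' + n) = k + n.
Proof. by move=> <-; rewrite addrA. Qed.

Definition precomp (l l' : Obj C) (k k' b : int) (c : Defs.Hom C l l' b)
  (hb : b + k' = k) : GHom (Pk l' k') (Pk l k).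
refine (@Build_GHom F C (Pk l' k') (Pk l k)
   (fun x n (g : Defs.Hom C l' x (k' + n)) => cmp (precomp_eq n hb) g c) _ _).
- move=> x j r v w /=; exact: cmp_linr.
- move=> x y a j j' e h v /=; rewrite /Pk_act.
  by rewrite (cmp_assoc (precomp_eq j hb) (shift_eq k' e) (shift_eq k e) (precomp_eq j' hb)).
Defined.

Definition idk (l : Obj C) (k : int) : Defs.Hom C l l (k + - k) :=
  castid l (esym (subrr k)).

Lemma yoneda_eq (k n : int) : - k + (k + n) = n.
Proof. by rewrite addrA addNr add0r. Qed.

Lemma yoneda (l l' : Obj C) (k k' : int) (phi : GHom (Pk l k) (Pk l' k'))
  x n (h : Defs.Hom C l x (k + n)) :
  phi x n h = cmp (shift_eq k' (yoneda_eq k n)) h (phi l (- k) (idk l k)).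
Proof.
transitivity (phi x n (Pk_act (yoneda_eq k n) h (idk l k))).
  by rewrite /Pk_act cmp_castid.
exact: (@ghom_nat _ _ _ _ phi _ _ _ _ _ (yoneda_eq k n) h (idk l k)).
Qed.

Lemma deg0_inv (l l' : Obj C) a (e1 : 0 = a) (c : Defs.Hom C l' l a) : c <> 0 ->
  forall b (e2 : 0 = b) z (e3 : b + a = z) (e4 : 0 = z),
  exists c'' : Defs.Hom C l l' b, cmp e3 c c'' = castid l e4.
Proof.
case: a / e1 c => c cn0 b e2; case: b / e2 => z e3 e4; case: z / e4 e3 => e3.
have ll : l' = l.
  case: (classic (l' = l)) => // /(hom_deg0_off c) //.
subst l'.
have [r cr] := hom_deg0_diag c.
have rn0 : r != 0.
  by apply/eqP => r0; apply: cn0; rewrite cr r0 scale0r.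
exists (r^-1 *: cid C l).
rewrite cr (linZ (cmp_linl e3 _)).
rewrite (@linZ _ _ _ (fun g => cmp e3 g (cid C l)) (fun r g1 g2 => cmp_linr e3 g1 g2 r _)).
by rewrite cmp_idr scalerA mulVf // scale1r.
Qed.
End Cat.

Section Sums.
Variables (F : fieldType) (C : PGCat F) (M : GMod C) (S : Type)
  (lam : S -> Obj C) (k : S -> int) (inc : forall s, GHom (Pk (lam s) (k s)) M).
Hypothesis dec : is_dsum inc.

Notation incL s x n := (@ghom_lin _ _ _ _ (inc s) x n).

Lemma sumU x n (l L : seq (ceq S)) (w : forall s, Defs.Hom C (lam s) x (k s + n)) :
  uniq L -> {subset l <= L} ->
  \sum_(s <- l) inc s x n (w s) = \sum_(s <- L) inc s x n (w s *+ count_mem s l).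
Proof.
move=> uL; elim: l => [|a l IH] sub.
  by rewrite big_nil big1 // => s _; rewrite mulr0n ghom0.
rewrite big_cons IH; last by move=> y yl; apply: sub; rewrite in_cons yl orbT.
rewrite [X in _ = X](eq_bigr (fun s : ceq S => inc s x n (w s *+ (a == s)) + inc s x n (w s *+ count_mem s l))); last first.
  by move=> s _ /=; rewrite mulrnDr (linD (incL s x n)).
rewrite big_split /=; congr (_ + _).
rewrite (bigD1_seq a) //=; last by apply: sub; rewrite in_cons eqxx.
rewrite eqxx mulr1n big1 ?addr0 // => s; rewrite eq_sym => /negbTE ->.
by rewrite mulr0n ghom0.
Qed.

Lemma uniq_rep x n (l1 l2 : seq (ceq S)) (w1 w2 : forall s, Defs.Hom C (lam s) x (k s + n)) :
  \sum_(s <- l1) inc s x n (w1 s) = \sum_(s <- l2) inc s x n (w2 s) ->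
  forall t : ceq S, w1 t *+ count_mem t l1 = w2 t *+ count_mem t l2.
Proof.
move=> E t.
set L := undup (l1 ++ l2).
have uL : uniq L := undup_uniq _.
have s1 : {subset l1 <= L} by move=> y yl; rewrite mem_undup mem_cat yl.
have s2 : {subset l2 <= L} by move=> y yl; rewrite mem_undup mem_cat yl orbT.
rewrite (sumU w1 uL s1) (sumU w2 uL s2) in E.
have E0 : \sum_(s <- L) inc s x n (w1 s *+ count_mem s l1 - w2 s *+ count_mem s l2) = 0.
  under eq_bigr do rewrite (linB (incL _ x n)).
  by rewrite sumrB E subrr.
case tL : (t \in L).
  apply/eqP; rewrite -subr_eq0; apply/eqP.
  exact: (dec.2 x n L _ (uniq_NoDup uL) E0 t (proj2 (In_mem t L) tL)).
have t1 : t \notin l1 by apply/negP => /s1; rewrite tL.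
have t2 : t \notin l2 by apply/negP => /s2; rewrite tL.
by rewrite (count_memPn t1) (count_memPn t2) !mulr0n.
Qed.

Definition rep x n (v : gcar M x n) : {l : seq (ceq S) &
  {w : forall s, Defs.Hom C (lam s) x (k s + n) | v = \sum_(s <- l) inc s x n (w s)}}.
Proof.
have [l Hl] := constructive_indefinite_description _ (dec.1 x n v).
have [w Hw] := constructive_indefinite_description _ Hl.
exact: (existT _ l (exist _ w Hw)).
Defined.

Definition coef (t : S) x n (v : gcar M x n) : Defs.Hom C (lam t) x (k t + n) :=
  let: existT l (exist w _) := rep v in w t *+ count_mem (t : ceq S) l.

Lemma coefE x n (v : gcar M x n) (l : seq (ceq S)) w :
  v = \sum_(s <- l) inc s x n (w s) -> forall t, coef t v = w t *+ count_mem (t : ceq S) l.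
Proof.
move=> E t; rewrite /coef; case: (rep v) => l' [w' E'].
by apply: uniq_rep; rewrite -E' E.
Qed.

Lemma coef_lin t x n r (v w : gcar M x n) :
  coef t (r *: v + w) = r *: coef t v + coef t w.
Proof.
case: (rep v) => l1 [w1 E1]; case: (rep w) => l2 [w2 E2].
set L := undup (l1 ++ l2).
have uL : uniq L := undup_uniq _.
have s1 : {subset l1 <= L} by move=> y yl; rewrite mem_undup mem_cat yl.
have s2 : {subset l2 <= L} by move=> y yl; rewrite mem_undup mem_cat yl orbT.
rewrite (sumU w1 uL s1) in E1; rewrite (sumU w2 uL s2) in E2.
have E3 : r *: v + w = \sum_(s <- L) inc s x n
   (r *: (w1 s *+ count_mem s l1) + w2 s *+ count_mem s l2).
  rewrite E1 E2 scaler_sumr -big_split /=.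
  by apply: eq_bigr => s _; rewrite (incL s x n).
rewrite (coefE E3) (coefE E1) (coefE E2).
by rewrite mulrnDl scalerMnr.
Qed.

Lemma coef_nat t x y a j j' (e : j + a = j') (f : Defs.Hom C x y a) (v : gcar M x j) :
  coef t (gact e f v) = Pk_act e f (coef t v).
Proof.
case: (rep v) => l [w E].
have E' : gact e f v = \sum_(s <- l) inc s y j' (Pk_act e f (w s)).
  rewrite E (lin_sum (gact_linv e f)); apply: eq_bigr => s _.
  by rewrite (@ghom_nat _ _ _ _ (inc s)).
rewrite (coefE E') (coefE E) /Pk_act.
by rewrite (linMn (cmp_linl _ f)).
Qed.

Definition proj (t : S) : GHom M (Pk (lam t) (k t)) :=
  @Build_GHom F C M (Pk (lam t) (k t)) (fun x n v => coef t v)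
    (fun x n r v w => coef_lin t r v w)
    (fun x y a j j' e f v => coef_nat t e f v).

Lemma in_part0 (P : int -> Prop) x n : @in_part F C M S lam k inc P x n 0.
Proof. by exists [::], (fun s => 0); split => //; rewrite big_nil. Qed.

Lemma in_partD (P : int -> Prop) x n (u1 u2 : gcar M x n) :
  in_part inc P u1 -> in_part inc P u2 -> in_part inc P (u1 + u2).
Proof.
move=> [l1 [w1 [P1 E1]]] [l2 [w2 [P2 E2]]].
set L := undup ((l1 : seq (ceq S)) ++ l2).
have uL : uniq L := undup_uniq _.
have s1 : {subset (l1 : seq (ceq S)) <= L} by move=> y yl; rewrite mem_undup mem_cat yl.
have s2 : {subset (l2 : seq (ceq S)) <= L} by move=> y yl; rewrite mem_undup mem_cat yl orbT.
exists L, (fun s => w1 s *+ count_mem (s : ceq S) l1 + w2 s *+ count_mem (s : ceq S) l2); split.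
  move=> s /In_mem; rewrite mem_undup mem_cat => /orP [] /In_mem; [exact: P1|exact: P2].
rewrite E1 E2 (sumU w1 uL s1) (sumU w2 uL s2) -big_split /=.
by apply: eq_bigr => s _; rewrite (linD (incL s x n)).
Qed.

End Sums.

Unset Implicit Arguments. Set Strict Implicit.
Theorem lemma3p2 (F : fieldType) (C : PGCat F) (X : GComplex C)
  (minX : minimal X)
  (S : int -> Type) (lam : forall j, S j -> Obj C) (k : forall j, S j -> int)
  (inc : forall j (s : S j), GHom (Pk (lam j s) (k j s)) (cobj X j))
  (dec : forall j, is_dsum (inc j)) :
  forall (i j : int) (x : Obj C) (n : int) (v : gcar (cobj X j) x n),
    in_part (inc j) (fun t => i < t) v ->
    in_part (inc (j + 1)) (fun t => i + 1 < t) (cd X j x n v).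
Proof.
move=> i j.
have [j' ->] : exists j', j = j' + 1 by exists (j - 1); rewrite subrK.
have key : forall (s : S (j'+1)) (t : S (j'+1+1)), k _ t <= k _ s ->
   forall x n h, coef (dec (j'+1+1)) t (cd X (j'+1) x n (inc (j'+1) s x n h)) = 0.
  move=> s t kts x n h.
  pose phi := gcomp (proj (dec (j'+1+1)) t) (gcomp (cd X (j'+1)) (inc (j'+1) s)).
  have -> : coef (dec (j'+1+1)) t (cd X (j'+1) x n (inc (j'+1) s x n h)) = phi x n h by [].
  rewrite yoneda.
  set c := phi _ _ _.
  suff -> : c = 0 by rewrite cmp_f0.
  move: kts; rewrite le_eqVlt => /orP [/eqP kts|kts]; last first.
    by apply: hom_neg; rewrite subr_lt0.
  have [//|/eqP cn0] := eqVneq c 0; exfalso.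
  have e1 : 0 = k _ t + - k _ s by rewrite kts subrr.
  have e2 : 0 = k _ s + - k _ t by rewrite kts subrr.
  have e3 : (k _ s + - k _ t) + (k _ t + - k _ s) = k _ s + - k _ s by rewrite kts subrr addr0.
  have [c'' Ec] := deg0_inv e1 cn0 e2 e3 (esym (subrr (k _ s))).
  have hb : (k _ s + - k _ t) + k _ t = k _ s by rewrite subrK.
  pose psi := precomp c'' hb.
  apply: (minX j' (Pk (lam _ s) (k _ s)) (gid _)).
  - by exists (gid _).
  - exists (lam _ s), (- k _ s), (idk (lam _ s) (k _ s)) => id0.
    by apply: cn0; rewrite /c id0 ghom0.
  exists (inc (j'+1) s), (gcomp (cd X (j'+1)) (inc (j'+1) s)),
    (gcomp (gcomp psi (proj (dec (j'+1+1)) t)) (cd X (j'+1))),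
    (gcomp psi (proj (dec (j'+1+1)) t)).
  have back : forall x n v, psi x n (phi x n v) = v.
    move=> y m v; have -> : psi y m (phi y m v) = cmp (precomp_eq m hb) (phi y m v) c'' by [].
    rewrite (yoneda phi) -/c.
    rewrite -(cmp_assoc e3 (shift_eq _ (yoneda_eq _ m)) (shift_eq _ (yoneda_eq _ m)) (precomp_eq m hb)).
    by rewrite Ec cmp_castid.
  split; [by []|split; [|split; [|split; [by []|split]]]].
  - by move=> y m v /=; rewrite cdd.
  - move=> y m v /=; rewrite cdd.
    have -> : coef (dec (j'+1+1)) t (0 : gcar (cobj X (j'+1+1)) y m) = 0 by exact: (ghom0 (proj (dec _) t)).
    by rewrite cmp_0f.
  - by move=> y m v; exact: back.
  - by move=> y m v; exact: back.
move=> x n v [l [w [Pl ->]]].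
rewrite (lin_sum (@ghom_lin _ _ _ _ (cd X (j'+1)) x n)).
elim: l Pl => [|a l IH] Pl; first by rewrite big_nil; apply: in_part0.
rewrite big_cons; apply: in_partD; last first.
  by apply: IH => s sl; apply: Pl; right.
set u := cd X (j'+1) x n _.
have [l' [w' E']] := (dec (j'+1+1)).1 x n u.
have ia : i < k _ a by apply: Pl; left.
exists (filter (fun t => k _ a < k _ t) (undup (l' : seq (ceq _)))),
  (fun t => w' t *+ count_mem (t : ceq _) l'); split.
  move=> t /In_mem; rewrite mem_filter => /andP [kt _].
  by rewrite -lezD1 in ia; exact: le_lt_trans ia kt.
rewrite big_filter E' (sumU _ w' (undup_uniq (l' : seq (ceq (S (j'+1+1)))))); last by move=> y; rewrite mem_undup.
rewrite (bigID (fun t => k _ a < k _ t)) /= [X in _ + X = _]big1 ?addr0 // => t.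
rewrite -leNgt => kt.
by rewrite -(coefE (dec _) E') key // ghom0.
Qed.
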